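(* Let $S$ be a set. A set of $S$-probabilities is $\vee$-specific if and only if it is both specific and weakly structured; i.e. $\mathcal C_2=\mathcal C_1\cap\mathcal C_4$.
   Context: An $S$-probability is a function $p\colon S\to[0,1]$; sets $P$ of them are ordered pointwise, $0,1$ are constant functions, $p':=1-p$, sums are pointwise; $p\vee q$ denotes the supremum in $P$. $p\wedge q=0$ means the only $x\in P$ with $x\le p,q$ is $x=0$; $p\perp q$ means $p\le 1-q$. Conditions: (1) $0,1\in P$; (2) $p\in P\Rightarrow 1-p\in P$; (3) $p,q\in P$, $p\wedge q=0\Rightarrow p+q\in P$; (6) $p,q\in P$, $p\wedge q=0\Rightarrow p+q\in P$ and $p+q=p\vee q$ in $P$; (8) $p,q,r\in P$, $p\perp q$, $q\perp r$, $p\wedge r=0\Rightarrow p+q+r\le 1$. $\mathcal C_1$: specific sets ((1),(2),(3)); $\mathcal C_2$: $\vee$-specific sets (specific sets satisfying (6)); $\mathcal C_4$: weakly structured sets ((1),(2),(8)). *)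

(* Defs.v *)
From Stdlib Require Import Reals.
Open Scope R_scope.

Definition zerof {S : Type} : S -> R := fun _ => 0.
Definition onef {S : Type} : S -> R := fun _ => 1.
Definition complf {S : Type} (p : S -> R) : S -> R := fun s => 1 - p s.
Definition addf {S : Type} (p q : S -> R) : S -> R := fun s => p s + q s.
Definition lef {S : Type} (p q : S -> R) : Prop := forall s, p s <= q s.

Definition is_S_prob_set {S : Type} (P : (S -> R) -> Prop) : Prop :=
  forall p, P p -> forall s, 0 <= p s <= 1.

Definition meet_zero {S : Type} (P : (S -> R) -> Prop) (p q : S -> R) : Prop :=
  forall x, P x -> lef x p -> lef x q -> x = zerof.

Definition perp {S : Type} (p q : S -> R) : Prop := lef p (complf q).

Definition is_sup_in {S : Type} (P : (S -> R) -> Prop) (p q r : S -> R) : Prop :=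
  P r /\ lef p r /\ lef q r /\
  (forall x, P x -> lef p x -> lef q x -> lef r x).

Definition cond1 {S : Type} (P : (S -> R) -> Prop) : Prop := P zerof /\ P onef.
Definition cond2 {S : Type} (P : (S -> R) -> Prop) : Prop :=
  forall p, P p -> P (complf p).
Definition cond3 {S : Type} (P : (S -> R) -> Prop) : Prop :=
  forall p q, P p -> P q -> meet_zero P p q -> P (addf p q).
Definition cond6 {S : Type} (P : (S -> R) -> Prop) : Prop :=
  forall p q, P p -> P q -> meet_zero P p q ->
    P (addf p q) /\ is_sup_in P p q (addf p q).
Definition cond8 {S : Type} (P : (S -> R) -> Prop) : Prop :=
  forall p q r, P p -> P q -> P r -> perp p q -> perp q r -> meet_zero P p r ->
    lef (addf (addf p q) r) onef.

Definition specific {S : Type} (P : (S -> R) -> Prop) : Prop :=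
  is_S_prob_set P /\ cond1 P /\ cond2 P /\ cond3 P.
Definition vee_specific {S : Type} (P : (S -> R) -> Prop) : Prop :=
  specific P /\ cond6 P.
Definition weakly_structured {S : Type} (P : (S -> R) -> Prop) : Prop :=
  is_S_prob_set P /\ cond1 P /\ cond2 P /\ cond8 P.

(* Main.v *)
Require Import Defs.
From Stdlib Require Import Reals Lra.
Open Scope R_scope.

Theorem lemma3p2 (S : Type) (P : (S -> R) -> Prop) (HP : is_S_prob_set P) :
  vee_specific P <-> (specific P /\ weakly_structured P).
Proof.
  split.
  - intros [Hs H6]. split; [exact Hs|].
    destruct Hs as [Hp [H1 [H2 H3]]].
    split; [exact Hp|]. split; [exact H1|]. split; [exact H2|].
    intros p q r Pp Pq Pr Hpq Hqr Hpr.
    destruct (H6 p r Pp Pr Hpr) as [_ [_ [_ [_ Hsup]]]].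
    assert (Hle : lef (addf p r) (complf q)).
    { apply Hsup. apply H2; exact Pq. exact Hpq.
      intro s. specialize (Hqr s). unfold complf in *. lra. }
    intro s. specialize (Hle s). unfold addf, complf, onef in *. lra.
  - intros [Hs Hw]. split; [exact Hs|].
    destruct Hs as [Hp [H1 [H2 H3]]].
    destruct Hw as [_ [_ [_ H8]]].
    intros p q Pp Pq Hpq.
    split; [apply H3; assumption|].
    split; [apply H3; assumption|].
    split. { intro s. pose proof (HP q Pq s). unfold addf. lra. }
    split. { intro s. pose proof (HP p Pp s). unfold addf. lra. }
    intros x Px Hpx Hqx.
    assert (Hc := H8 p (complf x) q Pp (H2 x Px) Pq).
    assert (Hle : lef (addf (addf p (complf x)) q) onef).
    { apply Hc; [| |exact Hpq].
      - intro s. specialize (Hpx s). unfold complf. lra.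
      - intro s. specialize (Hqx s). unfold complf. lra. }
    intro s. specialize (Hle s). unfold addf, complf, onef in *. lra.
Qed.
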